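(* Let $p$ be an odd prime, $k\in\{-1,1\}$, $n\ge 1$ an integer, and let $L_n^k(f,p)$ be a Legendre graph of order $n$ (with bijection $f$). Put $q=\lfloor n/p\rfloor$, $r=n-qp$ and $F=\{1,2,\dots,r\}$ (empty if $r=0$). For a vertex $v$ with $1\le f(v)\le qp$ let $$\omega^k(v)=\{\xi\in\{0,1,\dots,p-1\}:\ \xi\equiv f(v)+c \pmod p \text{ for some } c\in F,\ (\xi/p)=k\},$$ and for a vertex $v$ with $qp+1\le f(v)\le n$ let $\varepsilon(v)=f(v)-qp\in F$ and $$\pi^k(v)=\{\xi\in\{0,1,\dots,p-1\}:\ \xi\equiv f(v)+c \pmod p \text{ for some } c\in F\setminus\{\varepsilon(v)\},\ (\xi/p)=k\}.$$ Then for every vertex $v$: (i) if $1\le f(v)\le qp$ and $(2f(v)/p)=k$, then $\deg(v)=q\frac{p-1}{2}-1+|\omega^k(v)|$; (ii) if $1\le f(v)\le qp$ and either $(2f(v)/p)=-k$ or $f(v)\equiv 0\pmod p$, then $\deg(v)=q\frac{p-1}{2}+|\omega^k(v)|$; (iii) if $qp+1\le f(v)\le n$, then $\deg(v)=q\frac{p-1}{2}+|\pi^k(v)|$.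
   Context: For an odd prime $p$ and an integer $a$ not divisible by $p$, $(a/p)$ denotes the Legendre symbol: $1$ if $a$ is a quadratic residue mod $p$, $-1$ otherwise (it is not assigned the value $\pm1$ when $p\mid a$). For $k\in\{-1,1\}$, a Legendre graph $L_n^k(f,p)$ of order $n$ is a simple graph on an $n$-element vertex set $V$ together with a bijection $f:V\to\{1,2,\dots,n\}$, whose edges are exactly the pairs $\{a,b\}$ of distinct vertices with $p\nmid f(a)+f(b)$ and $((f(a)+f(b))/p)=k$. *)

(* Defs.v *)
From mathcomp Require Import all_boot all_order all_algebra.
Set Implicit Arguments. Unset Strict Implicit. Unset Printing Implicit Defensive.
Import Order.TTheory GRing.Theory Num.Theory.

(* When p | a the paper
   leaves it unassigned; we set it to 0, which is different from both
   admissible values of k, so "(a/p) = k" for k = +-1 implicitly entails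
   p \nmid a. *)
Definition legendre (p a : nat) : int :=
  if p %| a then 0%R
  else if [exists x : 'I_p, (x * x) %% p == a %% p] then 1%R else (-1)%R.

Definition bij_onto_1n (V : finType) (f : V -> nat) (n : nat) : Prop :=
  injective f /\ (forall v, 1 <= f v <= n) /\
  (forall m, 1 <= m <= n -> exists v, f v = m).

Definition legendre_adj (V : finType) (f : V -> nat) (p : nat) (k : int)
  (a b : V) : bool :=
  [&& a != b, ~~ (p %| f a + f b) & legendre p (f a + f b) == k].

Definition ldeg (V : finType) (f : V -> nat) (p : nat) (k : int) (v : V) : nat :=
  #|[set w : V | legendre_adj f p k v w]|.

Definition shifted_res (p : nat) (k : int) (x : nat) (C : pred nat) (r : nat)
  : {set 'I_p} :=
  [set xi : 'I_p | [exists c : 'I_r.+1, C (val c) && (0 < val c)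
                     && (val xi == (x + c) %% p)] && (legendre p xi == k)].

Definition omega (p : nat) (k : int) (r x : nat) : {set 'I_p} :=
  shifted_res p k x predT r.

Definition pik (p : nat) (k : int) (r x eps : nat) : {set 'I_p} :=
  shifted_res p k x (predC1 eps) r.

(* Main.v *)
Require Import Defs.
From mathcomp Require Import all_boot all_order all_algebra zify.
Import Order.TTheory GRing.Theory Num.Theory.

Lemma legendre_mod p a : legendre p (a %% p) = legendre p a.
Proof. by rewrite /legendre /dvdn !modn_mod. Qed.

Lemma legendre_shift p a q : legendre p (a + q * p) = legendre p a.
Proof. by rewrite -legendre_mod addnC modnMDl legendre_mod. Qed.

Lemma mod_inj p x a m m' : a <= m < a + p -> a <= m' < a + p ->
  (x + m) %% p = (x + m') %% p -> m = m'.
Proof.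
wlog le: m m' / m <= m'.
  move=> H Hm Hm' E; case: (leqP m m') => h; first exact: H.
  by symmetry; apply: H => //; apply: ltnW.
move=> Hm Hm' /eqP E.
have: p %| (x + m') - (x + m) by rewrite -eqn_mod_dvd ?leq_add2l // eq_sym.
rewrite subnDl => D.
case: (posnP (m' - m)) => h; first by lia.
have := dvdn_leq h D; lia.
Qed.

Lemma legendre_neq0 p a (k : int) : k != 0%R -> legendre p a = k -> ~~ (p %| a).
Proof. by move=> nk; rewrite /legendre; case: ifP => // _ E; rewrite -E eqxx in nk. Qed.

Lemma block_count p x a (h : pred nat) : 0 < p ->
  count (fun m => h ((x + m) %% p)) (iota a p) = count h (iota 0 p).
Proof.
move=> p0.
have U : uniq (map (fun m => (x + m) %% p) (iota a p)).
  rewrite map_inj_in_uniq ?iota_uniq // => m m'; rewrite !mem_iota => Hm Hm'.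
  by move=> /= E; exact: (@mod_inj p x a m m' Hm Hm' E).
have S : {subset map (fun m => (x + m) %% p) (iota a p) <= iota 0 p}.
  by move=> y /mapP [m _ ->]; rewrite mem_iota add0n ltn_pmod.
have Sz : size (iota 0 p) <= size (map (fun m => (x + m) %% p) (iota a p)) by rewrite size_map !size_iota.
have [_ E] := uniq_min_size U S Sz.
have P := uniq_perm U (iota_uniq 0 p) E.
by rewrite -(permP P) count_map.
Qed.

Lemma odd_h p : odd p -> p = 2 * ((p - 1) %/ 2) + 1.
Proof. move=> o; have := odd_double_half p; rewrite o; lia. Qed.

Lemma legendre1 p a : (legendre p a == 1%R) = ~~ (p %| a) && [exists x : 'I_p, (x * x) %% p == a %% p].
Proof. by rewrite /legendre; case: ifP => //= _; case: ifP. Qed.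

Lemma sq_inj p y z : prime p -> 0 < y -> 0 < z -> y + z < p -> y * y %% p = z * z %% p -> y = z.
Proof.
move=> pp.
wlog le: y z / z <= y.
  move=> H y0 z0 yz E; case: (leqP z y) => h; first exact: H.
  by symmetry; apply: H => //; [apply: ltnW | rewrite addnC].
move=> y0 z0 yz /eqP E.
have: p %| y * y - z * z by rewrite -eqn_mod_dvd ?leq_mul.
have -> : y * y - z * z = (y - z) * (y + z) by rewrite mulnBl !mulnDr; lia.
rewrite Euclid_dvdM // => /orP [] D.
  case: (posnP (y - z)) => h; first by lia.
  have := dvdn_leq h D; lia.
have yz0 : 0 < y + z by lia.
have := dvdn_leq yz0 D; lia.
Qed.

Lemma qr_count p : prime p -> odd p ->
  count (fun a => legendre p a == 1%R) (iota 0 p) = (p - 1) %/ 2.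
Proof.
move=> pp op; set h := (p - 1) %/ 2.
have Hp : p = 2 * h + 1 by exact: odd_h.
have p0 : 0 < p by exact: prime_gt0.
set s1 := filter (fun a => legendre p a == 1%R) (iota 0 p).
have U1 : uniq s1 by rewrite filter_uniq // iota_uniq.
have U2 : uniq (map (fun y => y * y %% p) (iota 1 h)).
  rewrite map_inj_in_uniq ?iota_uniq // => y z; rewrite !mem_iota => Hy Hz /= E.
  apply: (@sq_inj p y z pp) => //; lia.
have E : s1 =i map (fun y => y * y %% p) (iota 1 h).
  move=> a; rewrite mem_filter mem_iota add0n legendre1.
  apply/idP/idP.
    case/andP=> /andP [nd /existsP [x /eqP Ex]] ap.
    rewrite (modn_small ap) in Ex.
    have x0 : 0 < x.
      case: (posnP x) => // x0; move: nd; rewrite -Ex x0 /= mod0n dvdn0 //.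
    apply/mapP; case: (leqP x h) => xh.
      by exists (nat_of_ord x); [rewrite mem_iota; lia | rewrite Ex].
    exists (p - x); first by rewrite mem_iota; have := ltn_ord x; lia.
    rewrite -Ex -(modnMDl (2 * x) ((p - x) * (p - x)) p).
    have -> : (2 * x * p + (p - x) * (p - x)) = p * p + x * x.
      have := ltn_ord x; nia.
    by rewrite modnMDl.
  case/mapP => y; rewrite mem_iota => Hy ->.
  rewrite ltn_pmod // leq0n !andbT; apply/andP; split.
    rewrite /dvdn modn_mod -/(dvdn p (y * y)) Euclid_dvdM // orbb.
    apply/negP => D; have y0 : 0 < y by lia.
    have := dvdn_leq y0 D; lia.
  have yp : y < p by lia.
  by apply/existsP; exists (Ordinal yp); rewrite /= modn_mod.
have P := uniq_perm U1 U2 E.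
by rewrite -size_filter (perm_size P) size_map size_iota.
Qed.

Lemma qnr_count p : prime p -> odd p ->
  count (fun a => legendre p a == (-1)%R) (iota 0 p) = (p - 1) %/ 2.
Proof.
move=> pp op.
have p0 : 0 < p by exact: prime_gt0.
have Hp := @odd_h p op.
have S : forall (k : int), k != 0%R -> count (fun a => legendre p a == k) (iota 0 p)
   = count (fun a => legendre p a == k) (iota 1 (p - 1)).
  move=> k nk; have -> : iota 0 p = 0 :: iota 1 (p - 1) by rewrite -[in LHS](subnK p0) addn1.
  by rewrite /= /legendre dvdn0 eq_sym (negbTE nk).
have Q := qr_count p pp op; rewrite S // in Q; rewrite S //.
have := count_predC (fun a => legendre p a == 1%R) (iota 1 (p - 1)).
rewrite size_iota.
have -> : count (predC (fun a => legendre p a == 1%R)) (iota 1 (p - 1)) =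
          count (fun a => legendre p a == (-1)%R) (iota 1 (p - 1)).
  apply: eq_in_count => a; rewrite mem_iota => Ha /=.
  have nd : ~~ (p %| a).
    apply/negP => D; have a0 : 0 < a by lia.
    have := dvdn_leq a0 D; lia.
  by rewrite /legendre (negbTE nd); case: ifP.
lia.
Qed.

Lemma card_set_seq p (s : seq nat) : uniq s -> all (fun y => y < p) s ->
  #|[set xi : 'I_p | val xi \in s]| = size s.
Proof.
move=> U A.
have -> : [set xi : 'I_p | val xi \in s] = [set xi in pmap insub s].
  by apply/setP => xi; rewrite !inE mem_pmap_sub.
rewrite cardsE (card_uniqP (pmap_sub_uniq _ U)) size_pmap_sub.
by apply/eqP; rewrite -all_count.
Qed.

Lemma shifted_card p k x (C : pred nat) r : 0 < p -> r < p ->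
  #|shifted_res p k x C r| = count (fun c => C c && (legendre p (x + c) == k)) (iota 1 r).
Proof.
move=> p0 rp.
set fl := filter (fun c => C c && (legendre p (x + c) == k)) (iota 1 r).
set s := map (fun c => (x + c) %% p) fl.
have -> : shifted_res p k x C r = [set xi : 'I_p | val xi \in s].
  apply/setP => xi; rewrite !inE; apply/idP/idP.
    case/andP => /existsP [c /andP [/andP [Cc c0] /eqP E]] L.
    apply/mapP; exists (nat_of_ord c) => //.
    rewrite mem_filter Cc -legendre_mod -E L mem_iota /=.
    by move: c0 => /= c0; have := ltn_ord c; lia.
  case/mapP => c; rewrite mem_filter mem_iota => /andP [/andP [Cc L] Hc] E.
  have cr : c < r.+1 by lia.
  move: E => /= E; rewrite /= E legendre_mod L andbT; apply/existsP; exists (Ordinal cr) => /=.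
  by rewrite Cc /=; apply/andP; split; [lia | ].
rewrite card_set_seq.
- by rewrite size_map size_filter.
- rewrite map_inj_in_uniq ?filter_uniq ?iota_uniq // => c c'.
  rewrite !mem_filter !mem_iota => /andP [_ Hc] /andP [_ Hc'] /= E.
  apply: (@mod_inj p x 1 c c') => //; lia.
- by apply/allP => y /mapP [c _ ->]; rewrite ltn_pmod.
Qed.

Lemma count_excl (G : pred nat) x s : uniq s ->
  count (fun m => (m != x) && G m) s + ((x \in s) && G x) = count G s.
Proof.
elim: s => [|a s IH] /=; first by [].
case/andP => nas U; rewrite in_cons.
case: (eqVneq a x) => [<-|nax] /=.
  have -> : count (fun m => (m != a) && G m) s = count G s.
    apply: eq_in_count => m ms /=; case: (eqVneq m a) => // E.
    by rewrite -E ms in nas.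
  by rewrite add0n addnC.
by rewrite -addnA IH.
Qed.

Lemma count_blocks p x k q : 0 < p ->
  count (fun m => legendre p (x + m) == k) (iota 1 (q * p))
  = q * count (fun a => legendre p a == k) (iota 0 p).
Proof.
move=> p0; elim: q => [|q IH]; first by rewrite mul0n.
rewrite mulSnr iotaD count_cat IH mulSnr; congr (_ + _).
rewrite -(block_count p x (1 + q * p) (fun a => legendre p a == k) p0).
by apply: eq_count => m /=; rewrite legendre_mod.
Qed.

Lemma deg_count (V : finType) (f : V -> nat) n p (k : int) v : k != 0%R -> bij_onto_1n f n ->
  ldeg f p k v = count (fun m => (m != f v) && (legendre p (f v + m) == k)) (iota 1 n).
Proof.
move=> nk [inj [rng sur]].
set P := fun m => (m != f v) && (legendre p (f v + m) == k).
rewrite /ldeg -sum1_card.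
have -> : \sum_(w in [set w | legendre_adj f p k v w]) 1 = \sum_(w <- index_enum V | P (f w)) 1.
  apply: eq_bigl => w; rewrite inE /legendre_adj /P (inj_eq inj).
  rewrite [w == v]eq_sym; case: (legendre p (f v + f w) =P k) => L; last by rewrite !andbF.
  by rewrite (legendre_neq0 _ _ _ nk L).
rewrite -(big_map f P (fun _ => 1)) -sum1_count.
apply: perm_big; apply: uniq_perm.
- by rewrite map_inj_uniq // index_enum_uniq.
- exact: iota_uniq.
move=> m; rewrite mem_iota; apply/mapP/idP.
  by case=> w _ ->; have := rng w; lia.
move=> Hm; have [w Ew] := sur m ltac:(lia).
by exists w; rewrite ?mem_index_enum.
Qed.

Local Open Scope ring_scope.

Theorem lemma3p2 (p : nat) (k : int) (n : nat) (V : finType) (f : V -> nat) :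
  prime p -> odd p -> (k = 1 \/ k = -1) -> (1 <= n)%N -> bij_onto_1n f n ->
  let q := (n %/ p)%N in
  let r := (n - q * p)%N in
  forall v : V,
    [/\ ((1 <= f v <= q * p)%N -> legendre p (2 * f v) = k ->
           (ldeg f p k v)%:Z
             = (q * ((p - 1) %/ 2))%:Z - 1 + (#|omega p k r (f v)|)%:Z),
        ((1 <= f v <= q * p)%N ->
           (legendre p (2 * f v) = - k \/ (p %| f v)%N) ->
           (ldeg f p k v)%:Z
             = (q * ((p - 1) %/ 2))%:Z + (#|omega p k r (f v)|)%:Z)
      & ((q * p + 1 <= f v <= n)%N ->
           (ldeg f p k v)%:Z
             = (q * ((p - 1) %/ 2))%:Z
               + (#|pik p k r (f v) (f v - q * p)|)%:Z)].
Proof.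
move=> pp op hk n1 bij q r v.
have p0 : (0 < p)%N by exact: prime_gt0.
have nk : k != 0 by case: hk => ->.
have Hqp : (q * p <= n)%N by rewrite /q leq_divM.
have Er : r = (n %% p)%N by rewrite /r /q {1}(divn_eq n p) addKn.
have rp : (r < p)%N by rewrite Er ltn_pmod.
have Hn : n = (q * p + r)%N by rewrite /r; lia.
have xr := (proj1 (proj2 bij)) v.
set x := f v in xr *.
set h := ((p - 1) %/ 2)%N.
have Ktot : count (fun a => legendre p a == k) (iota 0 p) = h.
  by case: hk => ->; [exact: qr_count | exact: qnr_count].
set G := fun m => legendre p (x + m) == k.
set P := fun m => (m != x) && G m.
have D : ldeg f p k v = count P (iota 1 n) by exact: deg_count.
rewrite Hn iotaD count_cat in D.
have H1 := count_excl G x (iota 1 (q * p)) (iota_uniq 1 (q * p)).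
change (count P (iota 1 (q * p)) + ((x \in iota 1 (q * p)) && G x) = count G (iota 1 (q * p)))%N in H1.
have CB : count G (iota 1 (q * p)) = (q * h)%N by rewrite /G count_blocks // Ktot.
rewrite CB in H1.
have T : count P (iota (1 + q * p) r)
   = count (fun c => (q * p + c != x) && (legendre p (x + c) == k)) (iota 1 r).
  rewrite addnC iotaDl count_map; apply: eq_count => c /=.
  rewrite /P /G; congr (_ && _).
  have -> : (x + (q * p + c) = (x + c) + q * p)%N by lia.
  by rewrite legendre_shift.
rewrite T {T} in D.
have Om : (x <= q * p)%N -> count (fun c => (q * p + c != x) && (legendre p (x + c) == k)) (iota 1 r)
   = #|omega p k r x|.
  move=> xq; rewrite /omega shifted_card //; apply: eq_in_count => c.
  rewrite mem_iota => Hc /=.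
  by have -> : (q * p + c != x) by apply/eqP; lia.
split.
- move=> Hx L.
  rewrite mem_iota in H1.
  have Gx : G x.
    rewrite /G; have -> : (x + x = 2 * x)%N by lia.
    by rewrite L.
  rewrite Om in D; last by lia.
  have E : (1 <= x < 1 + q * p)%N by apply/andP; split; lia.
  rewrite E Gx /= in H1; by rewrite D -H1 !PoszD addrK.
- move=> Hx L.
  rewrite mem_iota in H1.
  have Gx : G x = false.
    rewrite /G; have -> : (x + x = 2 * x)%N by lia.
    case: L => [->|d]; first by case: hk => ->.
    apply/negP => /eqP L; have := legendre_neq0 _ _ _ nk L; rewrite dvdn_mull //.
  rewrite Gx andbF addn0 in H1.
  rewrite Om in D; last by lia.
  lia.
- move=> Hx.
  rewrite mem_iota in H1.
  have E : (1 <= x < 1 + q * p)%N = false by apply/negbTE; apply/negP => /andP [? ?]; lia.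
  rewrite E /= addn0 in H1.
  have T3 : count (fun c => ((q * p + c)%N != x) && (legendre p (x + c)%N == k)) (iota 1 r)
      = #|pik p k r x (x - q * p)%N|.
    rewrite /pik shifted_card //; apply: eq_in_count => c _ /=.
    have -> : ((q * p + c)%N != x) = (c != (x - q * p)%N).
      by apply/idP/idP => /eqP H; apply/eqP => H'; apply: H; lia.
    by [].
  by rewrite D -T3 -H1 PoszD.
Qed.
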